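(* Consider the streaming version of the Boolean Hidden Hypermatching problem $BHH_n^t$ (with $n=kt$ for an integer $k$), in which the binary vector $x\in\{0,1\}^n$ arrives as a stream, followed by the hyperedges of $M$ together with the Boolean vector $w$. There exists a streaming interactive proof for $BHH_n^t$ with communication and verifier space cost $O(t\log n\,\log\log n)$ bits.
   Context: $BHH_n^t$: the input is $x\in\{0,1\}^n$, a perfect $t$-uniform hypermatching $M=\{M_1,\dots,M_{n/t}\}$ on $[n]$ with $M_r=\{M_{r,1},\dots,M_{r,t}\}$, and $w\in\{0,1\}^{n/t}$. Let $Mx\in\{0,1\}^{n/t}$ have $r$-th coordinate $\bigoplus_{i=1}^t x_{M_{r,i}}$. It is promised that either $Mx\oplus w=0^{n/t}$ (YES) or $Mx\oplus w=1^{n/t}$ (NO); the goal is to decide which. A streaming interactive proof: a randomized verifier reads the stream once; afterwards it exchanges messages with a prover and outputs an answer or rejects; an honest prover makes it output the correct answer with probability at least $2/3$, and against any prover it outputs the correct answer or rejects with probability at least $2/3$. *)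

(* Defs.v *)
From HB Require Import structures.
From mathcomp Require Import all_boot all_order all_algebra.
Set Implicit Arguments. Unset Strict Implicit. Unset Printing Implicit Defensive.
Import Order.TTheory GRing.Theory Num.Theory.

(* Stream tokens: first the bits of x (index, bit), then the hyperedges of M,
   each together with the corresponding bit of w. *)
Inductive token (n t : nat) : Type :=
  | XTok of 'I_n & bool
  | ETok of t.-tuple 'I_n & bool.

(* M is a perfect t-uniform hypermatching on [n] with k hyperedges:
   the hyperedges (listed as t-tuples of vertices) partition [n]. *)
Definition perfect_hypermatching (k t : nat) (M : k.-tuple (t.-tuple 'I_(k * t))) : Prop :=
  perm_eq (flatten [seq val e | e <- M]) (enum 'I_(k * t)).

Definition Mx (k t : nat) (M : k.-tuple (t.-tuple 'I_(k * t)))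
  (x : {ffun 'I_(k * t) -> bool}) (r : 'I_k) : bool :=
  \big[addb/false]_(j < t) x (tnth (tnth M r) j).

(* Answer b = true means YES (Mx + w = 0^k); b = false means NO (Mx + w = 1^k). *)
Definition BHH_answer (k t : nat) (x : {ffun 'I_(k * t) -> bool})
  (M : k.-tuple (t.-tuple 'I_(k * t))) (w : k.-tuple bool) (b : bool) : Prop :=
  forall r : 'I_k, Mx M x r (+) tnth w r = ~~ b.

Definition BHH_stream (k t : nat) (x : {ffun 'I_(k * t) -> bool})
  (M : k.-tuple (t.-tuple 'I_(k * t))) (w : k.-tuple bool) : seq (token (k * t) t) :=
  [seq XTok t i (x i) | i <- enum 'I_(k * t)] ++
  [seq ETok (tnth M r) (tnth w r) | r <- enum 'I_k].

(* Verifier memory states and messages are bit strings.  At each step the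
   verifier receives rho fresh uniformly random bits. *)
Record SIP (n t : nat) := {
  rho : nat;
  init : seq bool;
  step : seq bool -> token n t -> rho.-tuple bool -> seq bool;
  rounds : nat;
  vlen : nat -> nat;   (* bound on the verifier's message length in round i *)
  plen : nat -> nat;   (* bound on the prover's message length in round i *)
  vmsg : nat -> seq bool -> rho.-tuple bool -> seq bool * seq bool;
      (* round i: (new state, message to prover) *)
  vrecv : nat -> seq bool -> seq bool -> rho.-tuple bool -> seq bool;
      (* round i: update state with the prover's reply *)
  output : seq bool -> option bool  (* Some true = YES, Some false = NO, None = reject *)
}.

(* A prover strategy: reply as a function of the verifier messages so far
   (the prover may depend on the whole input, as it is quantified per input). *)
Definition prover := seq (seq bool) -> seq bool.

Local Open Scope ring_scope.

Definition avg (r : nat) (f : r.-tuple bool -> rat) : rat :=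
  (\sum_(c : r.-tuple bool) f c) / (2 ^ r)%:R.

Fixpoint run_stream (n t : nat) (V : SIP n t) (st : seq bool) (s : seq (token n t))
  (F : seq bool -> rat) : rat :=
  match s with
  | [::] => F st
  | a :: s' => avg (fun c => run_stream V (@step n t V st a c) s' F)
  end.

(* Prover replies longer than plen i are truncated (the verifier reads only
   plen i bits). *)
Fixpoint run_inter (n t : nat) (V : SIP n t) (P : prover) (fuel i : nat)
  (tr : seq (seq bool)) (st : seq bool) (G : option bool -> rat) : rat :=
  match fuel with
  | 0 => G (output V st)
  | fuel'.+1 =>
      avg (fun c =>
        let sm := @vmsg n t V i st c in
        let tr' := rcons tr sm.2 in
        let a := take (plen V i) (P tr') in
        avg (fun c' => run_inter V P fuel' i.+1 tr' (@vrecv n t V i sm.1 a c') G))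
  end.

Definition prob_out (n t : nat) (V : SIP n t) (P : prover) (s : seq (token n t))
  (O : pred (option bool)) : rat :=
  run_stream V (init V) s
    (fun st => run_inter V P (rounds V) 0 [::] st (fun o => (O o)%:R)).

Definition SIP_cost_ok (n t : nat) (V : SIP n t) (cost : nat) : Prop :=
  [/\ (size (init V) <= cost)%N,
      (forall st a c, (size st <= cost)%N -> (size (@step n t V st a c) <= cost)%N),
      (forall i st c, (size st <= cost)%N ->
          (size (@vmsg n t V i st c).1 <= cost)%N /\ (size (@vmsg n t V i st c).2 <= vlen V i)%N),
      (forall i st m c, (size st <= cost)%N -> (size m <= plen V i)%N ->
          (size (@vrecv n t V i st m c) <= cost)%N) &
      (\sum_(i < rounds V) (vlen V i + plen V i) <= cost)%N].

Definition SIP_solves_BHH (k t : nat) (V : SIP (k * t) t) : Prop :=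
  forall (x : {ffun 'I_(k * t) -> bool}) (M : k.-tuple (t.-tuple 'I_(k * t)))
         (w : k.-tuple bool) (b : bool),
    perfect_hypermatching M -> BHH_answer x M w b ->
    (exists P : prover,
        prob_out V P (BHH_stream x M w) (pred1 (Some b)) >= 2%:R / 3%:R) /\
    (forall P : prover,
        prob_out V P (BHH_stream x M w) (fun o => o != Some (~~ b)) >= 2%:R / 3%:R).

Definition lg (n : nat) : nat := up_log 2 n.

(* Main.v *)
Require Import Defs.
From HB Require Import structures.
From mathcomp Require Import all_boot all_order all_algebra.
From mathcomp Require Import all_field finfield zify.
Set Implicit Arguments. Unset Strict Implicit. Unset Printing Implicit Defensive.
Import Order.TTheory GRing.Theory Num.Theory.
Local Open Scope ring_scope.

Fixpoint bits (d i : nat) : seq bool :=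
  if d is d'.+1 then odd i :: bits d' i./2 else [::].

Lemma size_bits d i : size (bits d i) = d.
Proof. by elim: d i => //= d IH i; rewrite IH. Qed.

Section Deg.
Variable F : fieldType.

Definition isdeg (d : nat) (h : F -> F) :=
  exists p : {poly F}, (size p <= d.+1)%N /\ forall X, h X = p.[X].

Lemma isdeg_cst d c : isdeg d (fun _ => c).
Proof.
exists c%:P; split; last by move=> X; rewrite hornerC.
by apply: leq_trans (size_polyC_leq1 c) _.
Qed.

Lemma isdeg_le d d' h : (d <= d')%N -> isdeg d h -> isdeg d' h.
Proof. by move=> le [p [sp hp]]; exists p; split => //; apply: leq_trans sp _. Qed.

Lemma isdeg_ext d h h' : (forall X, h X = h' X) -> isdeg d h -> isdeg d h'.
Proof. by move=> e [p [sp hp]]; exists p; split => // X; rewrite -e. Qed.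

Lemma isdeg_add d h1 h2 : isdeg d h1 -> isdeg d h2 -> isdeg d (fun X => h1 X + h2 X).
Proof.
move=> [p [sp hp]] [q [sq hq]]; exists (p + q); split.
  by apply: leq_trans (size_polyD _ _) _; rewrite geq_max sp sq.
by move=> X; rewrite hornerD hp hq.
Qed.

Lemma isdeg_mul d1 d2 h1 h2 : isdeg d1 h1 -> isdeg d2 h2 ->
  isdeg (d1 + d2) (fun X => h1 X * h2 X).
Proof.
move=> [p [sp hp]] [q [sq hq]]; exists (p * q); split.
  apply: leq_trans (size_polyMleq _ _) _; rewrite -subn1 leq_subLR; lia.
by move=> X; rewrite hornerM hp hq.
Qed.

Lemma isdeg_sum (I : Type) (r : seq I) d (h : I -> F -> F) :
  (forall i, isdeg d (h i)) -> isdeg d (fun X => \sum_(i <- r) h i X).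
Proof.
move=> hh; elim: r => [|a r IH].
  by apply: isdeg_ext (isdeg_cst d 0) => X; rewrite big_nil.
by apply: isdeg_ext (isdeg_add (hh a) IH) => X; rewrite big_cons.
Qed.
Lemma isdeg_prod (I : Type) (r : seq I) (d : I -> nat) (h : I -> F -> F) :
  (forall i, isdeg (d i) (h i)) ->
  isdeg (\sum_(i <- r) d i)%N (fun X => \prod_(i <- r) h i X).
Proof.
move=> hh; elim: r => [|a r IH].
  by apply: isdeg_ext (isdeg_cst _ 1) => X; rewrite big_nil.
rewrite big_cons; apply: isdeg_ext (isdeg_mul (hh a) IH) => X.
by rewrite big_cons.
Qed.

Definition ee (b : bool) (y : F) : F := if b then y else 1 - y.

Lemma isdeg_ee b : isdeg 1 (ee b).
Proof.
case: b.
  by exists 'X; split; [rewrite size_polyX | move=> X; rewrite hornerX].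
exists (1 - 'X); split; last by move=> X; rewrite hornerD hornerN hornerX hornerC.
apply: leq_trans (size_polyD _ _) _.
by rewrite size_polyN size_polyX size_polyC; case: (1 != 0 :> F).
Qed.

Definition chi (m v : nat) (z : seq F) : F :=
  \prod_(l < m) ee (nth false (bits m v) l) (nth 0 z l).

Lemma chi_deg m v (rho s : seq F) : (size rho < m)%N ->
  isdeg 1 (fun X => chi m v (rho ++ X :: s)).
Proof.
move=> hr.
have H := @isdeg_prod _ (index_enum 'I_m) (fun l => ((l : nat) == size rho) : nat)
  (fun l X => ee (nth false (bits m v) l) (nth 0 (rho ++ X :: s) l)).
apply: isdeg_le (H _); last first.
  move=> l; case: eqP => [-> | ne].
    by apply: isdeg_ext (isdeg_ee _) => X; rewrite nth_cat ltnn subnn.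
  apply: isdeg_ext (isdeg_cst 0 (ee (nth false (bits m v) l) (nth 0 (rho ++ 0 :: s) l))) => X.
  rewrite !nth_cat; case: ltnP => // hl.
  have : (0 < l - size rho)%N.
    by rewrite subn_gt0 ltn_neqAle hl andbT; apply/eqP => e; apply: ne.
  by case: (l - size rho)%N.
rewrite (bigD1 (Ordinal hr)) //= eqxx big1 // => i /eqP ne.
by case: eqP => // e; case: ne; apply: val_inj.
Qed.
End Deg.

Lemma sum_tupleS (T : finType) d (h : d.+1.-tuple T -> nat) :
  (\sum_(s : d.+1.-tuple T) h s = \sum_(X : T) \sum_(s : d.-tuple T) h [tuple of X :: s])%N.
Proof.
rewrite pair_big /=.
rewrite (reindex (fun p : T * d.-tuple T => [tuple of p.1 :: p.2])) //=.
exists (fun s : d.+1.-tuple T => (thead s, [tuple of behead s])).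
  by move=> [X s] _ /=; congr pair; apply: val_inj.
move=> s _; apply: val_inj => /=.
by case: s => [[|a s] //=].
Qed.

Lemma sum_double (V : nmodType) (h : nat -> V) N :
  \sum_(0 <= i < N.*2) h i = \sum_(0 <= i < N) (h i.*2 + h i.*2.+1).
Proof.
elim: N => [|N IH]; first by rewrite !big_geq.
rewrite doubleS !big_nat_recr //= ?IH ?addrA //; rewrite -addnn; lia.
Qed.

Section SC.
Variables (F : finFieldType) (m : nat) (f : seq F -> F).

Definition bitsF d i : seq F := map (fun b : bool => (b%:R : F)) (bits d i).

Definition S (rho : seq F) : F :=
  \sum_(i < 2 ^ (m - size rho)) f (rho ++ bitsF (m - size rho) i).

Lemma S_full rho : size rho = m -> S rho = f rho.
Proof. by move=> e; rewrite /S e subnn expn0 big_ord1 /= cats0. Qed.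

Lemma S_split rho : (size rho < m)%N -> S rho = S (rcons rho 0) + S (rcons rho 1).
Proof.
move=> hr; rewrite /S !size_rcons.
have -> : (m - size rho = (m - (size rho).+1).+1)%N by lia.
set d := (m - (size rho).+1)%N.
rewrite expnS mul2n -(big_mkord (fun _ => true) (fun i => f (rho ++ bitsF d.+1 i))) sum_double.
rewrite big_split /= !big_mkord.
congr (_ + _); apply: eq_bigr => i _; rewrite cat_rcons /bitsF /=.
  by rewrite odd_double doubleK.
by rewrite odd_double /= uphalf_double.
Qed.

Hypothesis hf : forall rho s, (size rho < m)%N -> isdeg 2 (fun X => f (rho ++ X :: s)).

Lemma S_deg rho : (size rho < m)%N -> isdeg 2 (fun X => S (rcons rho X)).
Proof.
move=> hr; rewrite /S.
have := @isdeg_sum F _ (index_enum 'I_(2 ^ (m - (size rho).+1))) 2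
   (fun i X => f (rho ++ X :: bitsF (m - (size rho).+1) i)).
move=> H; apply: isdeg_ext (H _) => [X|i]; last exact: hf.
by rewrite size_rcons; apply: eq_bigr => i _; rewrite cat_rcons.
Qed.

Variable G : seq F -> {poly F}.

Fixpoint passes d rho v (s : seq F) : bool :=
  match d, s with
  | 0, _ => v == f rho
  | d'.+1, X :: s' => ((G rho).[0] + (G rho).[1] == v) && passes d' (rcons rho X) (G rho).[X] s'
  | _, _ => false
  end.

Lemma passes_honest (hH : forall rho X, (size rho < m)%N -> (G rho).[X] = S (rcons rho X)) d :
  forall rho v s, (size rho + d)%N = m -> size s = d -> v = S rho -> passes d rho v s.
Proof.
elim: d => [|d IH] rho v s hs hsz ->.
  by rewrite /= S_full // -hs addn0.
case: s hsz => [|X s] //= [hsz].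
have hr : (size rho < m)%N by rewrite -hs; lia.
rewrite !hH // -S_split // eqxx /=.
by apply: IH => //; rewrite size_rcons -hs addSnnS.
Qed.

Hypothesis hG : forall rho, (size (G rho) <= 3)%N.

Lemma roots_le2 (p q : {poly F}) : (size p <= 3)%N -> (size q <= 3)%N -> p != q ->
  (#|[pred X | p.[X] == q.[X]]| <= 2)%N.
Proof.
move=> sp sq ne.
have nz : p - q != 0 by rewrite subr_eq0.
have := @max_poly_roots F (p - q) (enum [pred X | p.[X] == q.[X]]) nz.
rewrite enum_uniq cardE => /(_ _ isT) H.
have : (size (enum [pred X | p.[X] == q.[X]]) < size ((p - q)%R))%N.
  apply: H; apply/allP => X; rewrite mem_enum inE /root hornerD hornerN subr_eq0 //.
move=> lt; have : (size ((p - q)%R) <= 3)%N.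
  by apply: leq_trans (size_polyD _ _) _; rewrite size_polyN geq_max sp sq.
by move=> h; rewrite -ltnS; apply: leq_trans lt h.
Qed.

Lemma count_bad d : forall rho v, (size rho + d)%N = m -> v != S rho ->
  ((\sum_(s : d.-tuple F) passes d rho v s) * #|F| <= 2 * d * #|F| ^ d)%N.
Proof.
elim: d => [|d IH] rho v hs hv.
  rewrite big1 // => s _ /=; rewrite -S_full; last by rewrite -hs addn0.
  by rewrite (negbTE hv).
have hr : (size rho < m)%N by rewrite -hs; lia.
rewrite sum_tupleS /=.
case: eqP => hchk; last by rewrite big1 //= => X _; rewrite big1.
have [pS [spS hpS]] := S_deg hr.
have ne : G rho != pS.
  apply/eqP => e; move/eqP: hv; apply; rewrite -hchk e -!hpS -S_split //.
rewrite (bigID (fun X => (G rho).[X] == pS.[X])) /=.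
set a := (\sum_(i | _) _)%N; set b := (\sum_(i | _) _)%N.
have ha : (a <= 2 * #|F| ^ d)%N.
  apply: (@leq_trans (\sum_(X | (G rho).[X] == pS.[X]) #|F| ^ d)%N).
    apply: leq_sum => X _.
    apply: (@leq_trans (\sum_(s : d.-tuple F) 1)%N); first by apply: leq_sum => s _; case: passes.
    by rewrite sum1_card card_tuple.
  rewrite sum_nat_const leq_mul2r; apply/orP; right.
  exact: roots_le2.
have hb : (b * #|F| <= #|F| * (2 * d * #|F| ^ d))%N.
  rewrite /b big_distrl /=.
  apply: (@leq_trans (\sum_(X : F) (2 * d * #|F| ^ d))%N); last first.
    by rewrite sum_nat_const mulnC.
  apply: (@leq_trans (\sum_(X | ~~ ((G rho).[X] == pS.[X])) (2 * d * #|F| ^ d))%N).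
    apply: leq_sum => X hX; apply: IH.
      by rewrite size_rcons -hs; lia.
    by rewrite hpS.
  rewrite [X in (_ <= X)%N](bigID (fun X => (G rho).[X] == pS.[X])) /=; exact: leq_addl.
have := leq_mul2r #|F| a (2 * #|F| ^ d); rewrite ha orbT => ha'.
move: ha ha' hb; rewrite expnSr; set K := (#|F| ^ d)%N; set N := #|F| => _ ha' hb.
rewrite mulnDl; apply: leq_trans (leq_add ha' hb) _.
nia.
Qed.
End SC.

Lemma bits_inj d v i : (v < 2 ^ d)%N -> (i < 2 ^ d)%N -> bits d v = bits d i -> v = i.
Proof.
elim: d v i => [|d IH] v i /=.
  by rewrite expn0 !ltnS !leqn0 => /eqP -> /eqP ->.
rewrite expnS => hv hi [ho hb].
have hv' : (v./2 < 2 ^ d)%N by rewrite ltn_half_double -mul2n.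
have hi' : (i./2 < 2 ^ d)%N by rewrite ltn_half_double -mul2n.
by rewrite -(odd_double_half v) -(odd_double_half i) ho (IH _ _ hv' hi' hb).
Qed.

Section Cube.
Variables (F : finFieldType) (m k t : nat) (x : {ffun 'I_(k * t) -> bool})
  (q : t.-tuple 'I_(k * t)).

Definition xt (z : seq F) : F := \sum_(i <- enum 'I_(k * t)) (x i)%:R * chi m i z.
Definition ut (z : seq F) : F := \sum_(l < t) chi m (tnth q l) z.
Definition fB (z : seq F) : F := xt z * ut z.

Lemma fB_deg rho s : (size rho < m)%N -> isdeg 2 (fun X => fB (rho ++ X :: s)).
Proof.
move=> hr; apply: (@isdeg_mul _ 1 1).
  apply: isdeg_sum => i; apply: (@isdeg_mul _ 0 1); first exact: isdeg_cst.
  exact: chi_deg.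
by apply: isdeg_sum => l; apply: chi_deg.
Qed.

Lemma chi_cube v i : (v < 2 ^ m)%N -> (i < 2 ^ m)%N ->
  chi m v (bitsF F m i) = (v == i)%:R.
Proof.
move=> hv hi; rewrite /chi.
have e l : (l < m)%N -> nth 0 (bitsF F m i) l = (nth false (bits m i) l)%:R.
  by move=> hl; rewrite /bitsF (nth_map false) // size_bits.
case: eqP => [-> | ne].
  rewrite big1 // => l _; rewrite e //.
  by case: (nth false (bits m i) l) => /=; rewrite ?subrr ?subr0.
have [/existsP [l hl] | /existsPn H] :=
  boolP [exists l : 'I_m, nth false (bits m v) l != nth false (bits m i) l].
  rewrite (bigD1 l) //= e //; move: hl.
  by case: (nth false (bits m v) l); case: (nth false (bits m i) l) => //= _;
    rewrite ?mul0r ?subrr ?mul0r.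
case: ne; apply: (@bits_inj m) => //; apply: (eq_from_nth (x0 := false)); first by rewrite !size_bits.
move=> l; rewrite size_bits => hl; have := H (Ordinal hl); by rewrite negbK => /eqP.
Qed.

Hypotheses (hn : (k * t <= 2 ^ m)%N) (hchar : 2%:R = 0 :> F).

Lemma xt_pt (v : 'I_(k * t)) : xt (bitsF F m v) = (x v)%:R.
Proof.
have hv : (v < 2 ^ m)%N by apply: leq_trans (ltn_ord v) hn.
rewrite /xt big_enum /= (bigD1 v) //= chi_cube // eqxx mulr1 big1 ?addr0 //.
move=> u hu; rewrite chi_cube //; last by apply: leq_trans (ltn_ord u) hn.
by rewrite val_eqE (negbTE hu) mulr0.
Qed.

Lemma S_cube : S m fB [::] = (\big[addb/false]_(l < t) x (tnth q l) : bool)%:R.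
Proof.
rewrite /S /= subn0.
have hq l : (tnth q l < 2 ^ m)%N by apply: leq_trans (ltn_ord _) hn.
transitivity (\sum_(l < t) \sum_(i < 2 ^ m) xt (bitsF F m i) * ((tnth q l == i :> nat)%:R : F)).
  rewrite exchange_big /=; apply: eq_bigr => i _; rewrite /fB /ut mulr_sumr.
  by apply: eq_bigr => l _; rewrite chi_cube.
transitivity (\sum_(l < t) ((x (tnth q l))%:R : F)).
  apply: eq_bigr => l _; rewrite (bigD1 (Ordinal (hq l))) //= eqxx mulr1 xt_pt big1 ?addr0 //.
  move=> i hi; rewrite eq_sym; case: eqP => [e|]; last by rewrite mulr0.
  by case/eqP: hi; apply: val_inj.
symmetry; apply: (big_morph (fun b : bool => (b%:R : F)) (id1 := 0) (op1 := +%R)) => //.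
by move=> [] [] //=; rewrite ?add0r ?addr0 // -natrD hchar.
Qed.
End Cube.

Lemma card_btuple r : #|{: r.-tuple bool}| = (2 ^ r)%N.
Proof. by rewrite card_tuple card_bool. Qed.

Lemma map_cst (A B : Type) (b : B) (s : seq A) : map (fun=> b) s = nseq (size s) b.
Proof. by elim: s => //= a s ->. Qed.

Section Enc.
Variables (F : finFieldType) (j : nat).
Hypothesis hF : #|F| = (2 ^ j)%N.

Lemma E1 : #|F| = #|{: j.-tuple bool}|.
Proof. by rewrite card_btuple. Qed.

Definition fenc (x : F) : seq bool := val (enum_val (cast_ord E1 (enum_rank x))).
Definition fdec (s : seq bool) : F :=
  enum_val (cast_ord (esym E1) (enum_rank (insubd [tuple of nseq j false] s : j.-tuple bool))).

Lemma size_fenc x : size (fenc x) = j.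
Proof. by rewrite /fenc size_tuple. Qed.

Lemma fencK : cancel fenc fdec.
Proof.
move=> x; rewrite /fdec /fenc valKd enum_valK cast_ordK.
by rewrite enum_rankK.
Qed.

Definition encF (fs : seq F) : seq bool := flatten (map fenc fs).
Definition decF (L : nat) (s : seq bool) : seq F := map fdec (reshape (nseq L j) s).

Lemma size_encF fs : size (encF fs) = (size fs * j)%N.
Proof.
rewrite /encF size_flatten /shape -map_comp.
rewrite (eq_map (g := fun=> j)); first by rewrite map_cst sumn_nseq mulnC.
by move=> x /=; rewrite size_fenc.
Qed.

Lemma encFK L fs : size fs = L -> decF L (encF fs) = fs.
Proof.
move=> <-; rewrite /decF /encF.
have -> : nseq (size fs) j = shape (map fenc fs).
  rewrite /shape -map_comp (eq_map (g := fun=> j)) ?map_cst ?size_map //.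
  by move=> x /=; rewrite size_fenc.
rewrite flattenK -map_comp (eq_map fencK) map_id //.
Qed.
End Enc.

Section Proto.
Variables (F : finFieldType) (j m k t : nat).
Hypothesis hF : #|F| = (2 ^ j)%N.
Hypothesis hj : (0 < j)%N.

Record St := mkSt { sr : seq F; sA : F; sB : F; sv : F; sH : F;
  sseen : bool; sw0 : bool; sok : bool }.

Definition toF (s : St) : seq F :=
  sr s ++ [:: sA s; sB s; sv s; sH s; (sseen s)%:R; (sw0 s)%:R; (sok s)%:R].
Definition ofF (fs : seq F) : St :=
  mkSt (take m fs) (nth 0 fs (m + 0)) (nth 0 fs (m + 1)) (nth 0 fs (m + 2)) (nth 0 fs (m + 3))
    (nth 0 fs (m + 4) != 0) (nth 0 fs (m + 5) != 0) (nth 0 fs (m + 6) != 0).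

Definition enc (s : St) : seq bool := encF hF (toF s).
Definition dec (st : seq bool) : St := ofF (decF hF (m + 7) st).

Lemma natb_neq0 (b : bool) : ((b%:R : F) != 0) = b.
Proof. by case: b; rewrite ?oner_neq0 ?eqxx. Qed.

Lemma decK s : size (sr s) = m -> dec (enc s) = s.
Proof.
move=> hs; rewrite /dec /enc encFK; last by rewrite /toF size_cat hs.
case: s hs => r A B v H se w o /= hs.
rewrite /ofF /toF /= take_size_cat // !nth_cat hs !ltnNge !leq_addr /= !addKn /=.
by rewrite !natb_neq0.
Qed.

Lemma size_enc s : size (enc s) = ((size (sr s) + 7) * j)%N.
Proof. by rewrite /enc size_encF /toF size_cat. Qed.

Lemma E2 : #|{: (j * m).-tuple bool}| = #|{: m.-tuple F}|.
Proof. by rewrite card_btuple card_tuple hF expnM. Qed.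

Definition Phi (c : (j * m).-tuple bool) : m.-tuple F := enum_val (cast_ord E2 (enum_rank c)).
Definition Psi (r : m.-tuple F) : (j * m).-tuple bool := enum_val (cast_ord (esym E2) (enum_rank r)).

Lemma PhiK : cancel Phi Psi.
Proof. by move=> c; rewrite /Psi /Phi enum_valK cast_ordK enum_rankK. Qed.
Lemma PsiK : cancel Psi Phi.
Proof. by move=> r; rewrite /Psi /Phi enum_valK cast_ordKV enum_rankK. Qed.

Definition fresh (c : (j * m).-tuple bool) : St := mkSt (val (Phi c)) 0 0 0 0 false false true.

Definition proc (s : St) (a : token (k * t) t) : St :=
  match a with
  | XTok i b => mkSt (sr s) (sA s + (b%:R) * chi m i (sr s)) (sB s) (sv s) (sH s)
                  (sseen s) (sw0 s) (sok s)
  | ETok e b => if sseen s then s else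
      mkSt (sr s) (sA s) (\sum_(l < t) chi m (tnth e l) (sr s)) (sv s) (sH s) true b (sok s)
  end.

Definition stepV (st : seq bool) (a : token (k * t) t) (c : (j * m).-tuple bool) : seq bool :=
  enc (proc (if st == [::] then fresh c else dec st) a).

Definition decpoly (a : seq bool) : {poly F} :=
  (fdec hF (take j a))%:P + fdec hF (take j (drop j a)) *: 'X + fdec hF (drop (2 * j) a) *: 'X^2.

Definition encpoly (p : {poly F}) : seq bool := fenc hF p`_0 ++ fenc hF p`_1 ++ fenc hF p`_2.

Definition upd (i : nat) (s : St) (g : {poly F}) : St :=
  mkSt (sr s) (sA s) (sB s) g.[nth 0 (sr s) i] (if i == 0%N then g.[0] + g.[1] else sH s)
    (sseen s) (sw0 s) (sok s && ((i == 0%N) || (g.[0] + g.[1] == sv s))).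

Definition vm (i : nat) (st : seq bool) : seq bool * seq bool :=
  (st, if i == 0%N then [::] else fenc hF (nth 0 (sr (dec st)) i.-1)).

Definition vr (i : nat) (st a : seq bool) : seq bool := enc (upd i (dec st) (decpoly a)).

Definition outH (H : F) (w0 : bool) : option bool :=
  if H == 0 then Some (~~ w0) else if H == 1 then Some w0 else None.

Definition outV (st : seq bool) : option bool :=
  let s := dec st in if sok s && (sv s == sA s * sB s) then outH (sH s) (sw0 s) else None.

Definition VV : SIP (k * t) t :=
  {| rho := j * m; init := [::]; step := stepV; rounds := m;
     vlen := fun _ => j; plen := fun _ => (3 * j)%N;
     vmsg := fun i st _ => vm i st; vrecv := fun i st a _ => vr i st a;
     output := outV |}.


Lemma size_sr_proc s a : size (sr (proc s a)) = size (sr s).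
Proof. by case: a => [i b|e b] //=; case: sseen. Qed.

Lemma size_sr_dec st : (size (sr (dec st)) <= m)%N.
Proof. by rewrite /= size_take; case: ltnP => // /ltnW. Qed.

Lemma size_sr_in st c : (size (sr (if st == [::] then fresh c else dec st)) <= m)%N.
Proof. by case: eqP => _; rewrite ?size_sr_dec //= size_tuple. Qed.

Lemma VV_cost cost : ((m + 7) * j <= cost)%N -> (4 * j * m <= cost)%N -> SIP_cost_ok VV cost.
Proof.
move=> h1 h2; split => //=.
- move=> st a c _; rewrite /stepV size_enc size_sr_proc.
  by apply: leq_trans h1; rewrite leq_mul2r leq_add2r size_sr_in orbT.
- move=> i st c hs; split => //; case: eqP => // _; by rewrite size_fenc.
- move=> i st a c _ _; rewrite /vr size_enc /=.
  by apply: leq_trans h1; rewrite leq_mul2r leq_add2r size_sr_dec orbT.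
- rewrite sum_nat_const card_ord; apply: leq_trans h2; rewrite mulnC; lia.
Qed.

Lemma eq_avg r (f g : r.-tuple bool -> rat) : (forall c, f c = g c) -> avg f = avg g.
Proof. by move=> e; rewrite /avg; congr (_ / _); apply: eq_bigr => c _; rewrite e. Qed.

Lemma avg_const r (a : rat) : avg (fun _ : r.-tuple bool => a) = a.
Proof.
rewrite /avg sumr_const card_btuple -[a *+ _]mulr_natr mulfK //.
by rewrite pnatr_eq0 -lt0n expn_gt0.
Qed.

Lemma run_stream_enc ss s0 (G : seq bool -> rat) : size (sr s0) = m ->
  run_stream VV (enc s0) ss G = G (enc (foldl proc s0 ss)).
Proof.
elim: ss s0 => [|a ss IH] s0 hs //=.
have ne : (enc s0 == [::]) = false.
  by apply/negbTE; rewrite -size_eq0 size_enc hs muln_eq0 negb_or -!lt0n addn_gt0 orbT hj.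
rewrite (eq_avg (g := fun _ => G (enc (foldl proc (proc s0 a) ss)))) ?avg_const //.
by move=> c; rewrite /= /stepV ne decK // IH // size_sr_proc.
Qed.

Lemma run_stream_init a ss (G : seq bool -> rat) :
  run_stream VV [::] (a :: ss) G = avg (fun c => G (enc (foldl proc (fresh c) (a :: ss)))).
Proof.
apply: eq_avg => c.
have -> : @step _ _ VV [::] a c = enc (proc (fresh c) a) by rewrite /= /stepV eqxx.
have hs : size (sr (proc (fresh c) a)) = m by rewrite size_sr_proc /= size_tuple.
exact: (run_stream_enc ss G hs).
Qed.

Fixpoint detI (P : prover) fuel i tr st :=
  match fuel with
  | 0 => outV st
  | f'.+1 => let sm := vm i st in let tr' := rcons tr sm.2 in
      detI P f' i.+1 tr' (vr i sm.1 (take (3 * j) (P tr')))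
  end.

Lemma run_interE P fuel i tr st (G : option bool -> rat) :
  run_inter VV P fuel i tr st G = G (detI P fuel i tr st).
Proof.
elim: fuel i tr st => [|f IH] i tr st //=.
rewrite (eq_avg (g := fun _ => G (detI P f i.+1 (rcons tr (vm i st).2)
    (vr i (vm i st).1 (take (3 * j) (P (rcons tr (vm i st).2))))))) ?avg_const //.
Qed.

Definition Gof (P : prover) (rho : seq F) : {poly F} :=
  decpoly (take (3 * j) (P ([::] :: map (fenc hF) rho))).

Lemma detI_sim P (f0 : seq F -> F) d : forall i s, (i + d)%N = m -> (0 < i)%N ->
  size (sr s) = m -> sA s * sB s = f0 (sr s) ->
  detI P d i ([::] :: map (fenc hF) (take i.-1 (sr s))) (enc s) =
  if sok s && passes f0 (Gof P) d (take i (sr s)) (sv s) (drop i (sr s))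
  then outH (sH s) (sw0 s) else None.
Proof.
elim: d => [|d IH] i s hid hi hs hAB.
  rewrite /= /outV decK // hAB.
  by move: hid; rewrite addn0 => ->; rewrite take_oversize ?hs.
have him : (i < m)%N by rewrite -hid; lia.
have hi1 : (i.-1 < size (sr s))%N by rewrite hs; lia.
rewrite /=.
have hd : take m (decF hF (m + 7) (enc s)) = sr s by have := congr1 sr (decK hs).
have hi0 : (i == 0%N) = false by case: (i) hi.
rewrite hd hi0 -map_rcons -(take_nth 0 hi1) prednK //.
rewrite /vr decK //.
 have := IH i.+1 (upd i s (Gof P (take i (sr s)))).
rewrite /= hi0 hs => -> //; last by rewrite -hid addnS.
rewrite [drop i _](drop_nth 0) ?hs // -(take_nth 0) ?hs // /=.
by rewrite andbA.
Qed.

Lemma detI_full P (f0 : seq F -> F) s : (0 < m)%N -> size (sr s) = m -> sok s ->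
  sA s * sB s = f0 (sr s) ->
  detI P m 0 [::] (enc s) =
  (let H := (Gof P [::]).[0] + (Gof P [::]).[1] in
   if passes f0 (Gof P) m [::] H (sr s) then outH H (sw0 s) else None).
Proof.
move=> hm hs ho hAB.
have [m' em] : exists m', m = m'.+1 by exists m.-1; rewrite prednK.
have -> : detI P m 0 [::] (enc s) = detI P m'.+1 0 [::] (enc s) by rewrite -em.
have -> : passes f0 (Gof P) m = passes f0 (Gof P) m'.+1 by rewrite -em.
rewrite /= /vr decK //.
have := @detI_sim P f0 m' 1 (upd 0 s (Gof P [::])).
have h1 : (1 + m')%N = m by rewrite em add1n.
rewrite /= hs ho take0 /= => /(_ h1 isT erefl hAB) ->.
move: hs; rewrite em; case: (sr s) => //= r0 r' _.
by rewrite take0 drop0 eqxx.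
Qed.

Lemma fold_X (x : {ffun 'I_(k * t) -> bool}) l s :
  foldl proc s [seq XTok t i (x i) | i <- l] =
  mkSt (sr s) (sA s + \sum_(i <- l) (x i)%:R * chi m i (sr s)) (sB s) (sv s) (sH s)
    (sseen s) (sw0 s) (sok s).
Proof.
elim: l s => [|a l IH] s /=; first by rewrite big_nil addr0; case: s.
by rewrite IH /= big_cons addrA.
Qed.

Lemma fold_E_seen (M : k.-tuple (t.-tuple 'I_(k * t))) (w : k.-tuple bool) l s :
  sseen s -> foldl proc s [seq ETok (tnth M r) (tnth w r) | r <- l] = s.
Proof. by elim: l s => [|a l IH] s //= hs; rewrite hs IH. Qed.

Lemma stream_final x M w r0 rest c : enum 'I_k = r0 :: rest ->
  foldl proc (fresh c) (BHH_stream x M w) =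
  mkSt (val (Phi c)) (xt m x (val (Phi c))) (ut m (tnth M r0) (val (Phi c))) 0 0 true
    (tnth w r0) true.
Proof.
move=> he; rewrite /BHH_stream foldl_cat fold_X he /= fold_E_seen //=.
by rewrite add0r.
Qed.

Definition Out (x : {ffun 'I_(k * t) -> bool}) (M : k.-tuple (t.-tuple 'I_(k * t)))
  (w : k.-tuple bool) (r0 : 'I_k) (P : prover) (r : seq F) : option bool :=
  let H := (Gof P [::]).[0] + (Gof P [::]).[1] in
  if passes (fB m x (tnth M r0)) (Gof P) m [::] H r then outH H (tnth w r0) else None.

Lemma prob_outE x M w r0 rest P (O : pred (option bool)) :
  (0 < m)%N -> (0 < k * t)%N -> enum 'I_k = r0 :: rest ->
  prob_out VV P (BHH_stream x M w) O =
  avg (fun c : (j * m).-tuple bool => (O (Out x M w r0 P (val (Phi c))))%:R).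
Proof.
move=> hm hn he; rewrite /prob_out.
case E: (BHH_stream x M w) => [|a ss].
  move: E; rewrite /BHH_stream; case: (enum 'I_(k * t)) (size_enum_ord (k * t)) => //=.
  by move=> e; rewrite -e in hn.
rewrite run_stream_init -E; apply: eq_avg => c.
rewrite (stream_final _ _ _ _ he) run_interE (@detI_full P (fB m x (tnth M r0))) //= ?size_tuple //.
Qed.

Lemma avg_Phi (h : seq F -> rat) :
  avg (fun c : (j * m).-tuple bool => h (val (Phi c))) =
  (\sum_(r : m.-tuple F) h r) / (2 ^ (j * m))%:R.
Proof.
rewrite /avg; congr (_ / _).
rewrite (reindex Psi) /=; last by exists Phi => r _; rewrite ?PsiK ?PhiK.
by apply: eq_bigr => r _; rewrite PsiK.
Qed.

Lemma size_decpoly a : (size (decpoly a) <= 3)%N.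
Proof.
rewrite /decpoly; apply: leq_trans (size_polyD _ _) _; rewrite geq_max; apply/andP; split.
  apply: leq_trans (size_polyD _ _) _; rewrite geq_max; apply/andP; split.
    by apply: leq_trans (size_polyC_leq1 _) _.
  by apply: leq_trans (size_scale_leq _ _) _; rewrite size_polyX.
by apply: leq_trans (size_scale_leq _ _) _; rewrite size_polyXn.
Qed.

Lemma encpolyK (p : {poly F}) : (size p <= 3)%N -> decpoly (take (3 * j) (encpoly p)) = p.
Proof.
move=> sp; rewrite /encpoly take_oversize; last by rewrite !size_cat !size_fenc; lia.
rewrite /decpoly take_size_cat ?size_fenc // drop_size_cat ?size_fenc //.
rewrite take_size_cat ?size_fenc // mul2n -addnn -drop_drop drop_size_cat ?size_fenc //.
rewrite drop_size_cat ?size_fenc // !fencK.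
apply/polyP => i; rewrite !coefD coefC !coefZ coefX coefXn.
case: i => [|[|[|i]]] /=; rewrite ?mulr0 ?mulr1 ?addr0 ?add0r //.
by rewrite nth_default //; apply: leq_trans sp _.
Qed.

Lemma size_decpoly_Gof P rho : (size (Gof P rho) <= 3)%N.
Proof. exact: size_decpoly. Qed.

Section Honest.
Variable f0 : seq F -> F.
Hypothesis hf0 : forall rho s, (size rho < m)%N -> isdeg 2 (fun X => f0 (rho ++ X :: s)).

Lemma exGh rho : exists p : {poly F}, (size p <= 3)%N &&
  ((size rho < m)%N ==> [forall X, p.[X] == S m f0 (rcons rho X)]).
Proof.
case: (ltnP (size rho) m) => h; last by exists 0; rewrite size_poly0 /=; case: ltnP h => // a b; lia.
have [p [sp hp]] := S_deg hf0 h; exists p; rewrite sp /=.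
by apply/forallP => X; rewrite hp.
Qed.

Definition Gh rho : {poly F} := xchoose (exGh rho).

Lemma Gh_size rho : (size (Gh rho) <= 3)%N.
Proof. by have /andP[] := xchooseP (exGh rho). Qed.

Lemma Gh_val rho X : (size rho < m)%N -> (Gh rho).[X] = S m f0 (rcons rho X).
Proof.
move=> h; have /andP[_ /implyP /(_ h) /forallP /(_ X) /eqP] := xchooseP (exGh rho).
by [].
Qed.

Definition Ph : prover := fun tr => encpoly (Gh (map (fdec hF) (behead tr))).

Lemma Gof_Ph rho : Gof Ph rho = Gh rho.
Proof.
rewrite /Gof /Ph /= -map_comp (eq_map (fencK hF)) map_id.
by rewrite encpolyK // Gh_size.
Qed.
End Honest.

Section Correct.
Variables (x : {ffun 'I_(k * t) -> bool}) (M : k.-tuple (t.-tuple 'I_(k * t)))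
  (w : k.-tuple bool) (b : bool) (r0 : 'I_k).
Hypotheses (hm : (0 < m)%N) (hn : (k * t <= 2 ^ m)%N) (hchar : 2%:R = 0 :> F)
  (hFm : (6 * m <= #|F|)%N) (hans : BHH_answer x M w b).

Let f0 := @fB F m k t x (tnth M r0).
Let hf0 : forall rho s, (size rho < m)%N -> isdeg 2 (fun X => f0 (rho ++ X :: s)).
Proof. by move=> rho s h; apply: fB_deg. Qed.

Lemma S0E : S m f0 [::] = (Mx M x r0 : bool)%:R.
Proof. by rewrite /f0 S_cube. Qed.

Lemma outH_ok : outH (S m f0 [::]) (tnth w r0) = Some b.
Proof.
have := hans r0; rewrite S0E /outH.
case: (Mx M x r0) => /=.
  by rewrite oner_eq0 eqxx; case: (tnth w r0); case: b.
by rewrite eqxx; case: (tnth w r0); case: b.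
Qed.

Lemma complete r : size r = m -> Out x M w r0 (Ph hf0) r = Some b.
Proof.
move=> hr; rewrite /Out !Gof_Ph.
have hH : forall rho X, (size rho < m)%N -> (Gof (Ph hf0) rho).[X] = S m f0 (rcons rho X).
  by move=> rho X h; rewrite Gof_Ph Gh_val.
have eH : (Gh hf0 [::]).[0] + (Gh hf0 [::]).[1] = S m f0 [::].
  by rewrite !Gh_val // -S_split.
rewrite eH (passes_honest hH) ?outH_ok //.
Qed.

Lemma sound P :
  ((\sum_(r : m.-tuple F) (Out x M w r0 P r == Some (~~ b))) * 3 <= #|F| ^ m)%N.
Proof.
set H := (Gof P [::]).[0] + (Gof P [::]).[1].
have [eH | neH] := eqVneq H (S m f0 [::]).
  rewrite big1 // => r _; rewrite /Out -/H eH outH_ok.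
  by case: passes => //; case: b.
have hc := count_bad hf0 (@size_decpoly_Gof P) (d := m) (rho := [::]) (v := H) erefl neH.
have hle : (\sum_(r : m.-tuple F) (Out x M w r0 P r == Some (~~ b)) <=
            \sum_(r : m.-tuple F) passes f0 (Gof P) m [::] H r)%N.
  apply: leq_sum => r _; rewrite /Out -/H.
  by case: passes => //; rewrite leq_b1.
move: hc => /= hc.
have := leq_mul2r #|F| (\sum_(r : m.-tuple F) (Out x M w r0 P r == Some (~~ b)))%N
  (\sum_(r : m.-tuple F) passes f0 (Gof P) m [::] H r)%N.
rewrite hle orbT => h2.
have hF0 : (0 < #|F|)%N by rewrite hF expn_gt0.
rewrite -(leq_pmul2r hF0); move: h2 hc hFm.
set a := (\sum_(r : _) _)%N; set c := (\sum_(r : _) _)%N; set N := #|F|.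
set K := (N ^ m)%N => h2 hc h6.
have h7 : (6 * m * K <= N * K)%N by rewrite leq_mul2r h6 orbT.
nia.
Qed.

Lemma card_mF : (2 ^ (j * m))%N = (#|F| ^ m)%N.
Proof. by rewrite hF expnM. Qed.

Lemma prob_complete rest : (0 < k * t)%N -> enum 'I_k = r0 :: rest ->
  2%:R / 3%:R <= prob_out VV (Ph hf0) (BHH_stream x M w) (pred1 (Some b)).
Proof.
move=> hkt he; rewrite (@prob_outE x M w r0 rest) // (avg_Phi (fun r => (pred1 (Some b) (Out x M w r0 (Ph hf0) r))%:R)).
rewrite (eq_bigr (fun _ => 1)); last first.
  by move=> r _; rewrite /= complete ?size_tuple // eqxx.
rewrite sumr_const card_tuple card_mF -[1 *+ _]mulr_natr mul1r mulfV; last first.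
  by rewrite pnatr_eq0 -lt0n expn_gt0 hF expn_gt0.
by rewrite ler_pdivrMr ?ltr0n // mul1r ler_nat.
Qed.

Lemma ratio_ge (g N : nat) : (2 * N <= 3 * g)%N -> (0 < N)%N ->
  2%:R / 3%:R <= g%:R / N%:R :> rat.
Proof.
move=> h hN; rewrite ler_pdivlMr ?ltr0n // mulrAC ler_pdivrMr ?ltr0n //.
by rewrite -!natrM ler_nat; lia.
Qed.

Lemma prob_sound P rest : (0 < k * t)%N -> enum 'I_k = r0 :: rest ->
  2%:R / 3%:R <= prob_out VV P (BHH_stream x M w) (fun o => o != Some (~~ b)).
Proof.
move=> hkt he; rewrite (@prob_outE x M w r0 rest) // (avg_Phi (fun r => ((Out x M w r0 P r != Some (~~ b)) : nat)%:R)) -natr_sum card_mF.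
apply: ratio_ge; last by rewrite expn_gt0 hF expn_gt0.
have := sound P.
have : (\sum_(r : m.-tuple F) ((Out x M w r0 P r != Some (~~ b)) + (Out x M w r0 P r == Some (~~ b))))%N
  = (#|F| ^ m)%N.
  rewrite (eq_bigr (fun _ => 1%N)); first by rewrite sum1_card card_tuple.
  by move=> r _; case: eqP.
rewrite big_split /=; lia.
Qed.
End Correct.
Lemma VV_solves (hm : (0 < m)%N) (hn : (k * t <= 2 ^ m)%N) (hchar : 2%:R = 0 :> F)
  (hFm : (6 * m <= #|F|)%N) (hkt : (0 < k * t)%N) : SIP_solves_BHH VV.
Proof.
move=> x M w b _ hans.
case E: (enum 'I_k) => [|r0 rest].
  by have := size_enum_ord k; rewrite E /= => ek; exfalso; move: hkt; rewrite -ek.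
split; first by eexists; apply: (prob_complete hm hn hchar hans hkt E).
by move=> P; apply: (prob_sound hm hn hchar hFm hans P hkt E).
Qed.
End Proto.

Local Close Scope ring_scope.

Theorem lemma13 :
  exists C : nat, forall t k : nat, (0 < t)%N -> (0 < k)%N -> (4 <= k * t)%N ->
    exists V : SIP (k * t) t,
      SIP_cost_ok V (C * t * lg (k * t) * lg (lg (k * t))) /\ SIP_solves_BHH V.
Proof.
exists 20 => t k ht hk h4.
set n := (k * t)%N; set m := lg n; set L := lg m.
have hn : (n <= 2 ^ m)%N by apply: up_logP.
have hm2 : (2 <= m)%N.
  case: (leqP 2 m) => // h; move: hn; rewrite /m.
  have : (2 ^ lg n <= 2 ^ 1)%N by rewrite leq_exp2l //; lia.
  rewrite -/m; lia.
have hmL : (m <= 2 ^ L)%N by apply: up_logP.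
have hL : (1 <= L)%N.
  case: (leqP 1 L) => // h; move: hmL; have -> : L = 0%N by lia.
  rewrite expn0; lia.
set j := (L + 3)%N.
have hj : (0 < j)%N by rewrite /j addn3.
have [F hc hcard] := @pPrimePowerField 2 j isT hj.
exists (VV m k t hcard).
split.
  apply: (VV_cost k t hcard hj).
    rewrite /j; nia.
  rewrite /j; nia.
apply: (VV_solves hcard hj).
- by rewrite /m up_log_gt0; apply/andP; split => //; lia.
- exact: hn.
- exact: (GRing.pcharf0 hc).
- rewrite hcard /j expnD; have : (2 ^ 3 = 8)%N by []. move=> ->; nia.
- rewrite /n; lia.
Qed.
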